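(* Let $n,\kappa,d'\ge1$ and $1\le i_0\le d'$. Let $\mathcal{V}_1,\dots,\mathcal{V}_K\in\mathbb{R}^{p_1\times\cdots\times p_{d'}}$, with $p_{i_0}=n^\kappa$, be an orthonormal system (with respect to the Frobenius inner product) of rank-one tensors $\mathcal{V}_k=\mathbf{v}^1_k\circ\cdots\circ\mathbf{v}^{d'}_k$ with $\|\mathbf{v}^i_k\|_2=1$ for all $i,k$. Let $A_{i_0}\in\mathbb{R}^{m\times n^\kappa}$ have the RIP$(\varepsilon/2,\mathcal{S}_{1,2})$ property and assume $\mathbf{v}^{i_0}_k\in\mathcal{S}_1$ for all $k$. Let $\mathcal{L}(\mathcal{X})=\mathcal{X}\times_{i_0}A_{i_0}$. Then $(1-\varepsilon)\|\mathcal{V}_k\|^2\le\|\mathcal{L}\mathcal{V}_k\|^2\le(1+\varepsilon)\|\mathcal{V}_k\|^2$ for all $k$, and $(1-\varepsilon)\|\mathcal{V}_k\pm\mathcal{V}_l\|^2\le\|\mathcal{L}(\mathcal{V}_k\pm\mathcal{V}_l)\|^2\le(1+\varepsilon)\|\mathcal{V}_k\pm\mathcal{V}_l\|^2$ for all $1\le k,l\le K$.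
   Context: $\|\cdot\|$ is the Frobenius norm, $\circ$ the outer product, and $\times_j$ the $j$-mode product $(\mathcal{X}\times_jU)_{i_1,\dots,\ell,\dots,i_D}=\sum_{i_j}\mathcal{X}_{i_1,\dots,i_j,\dots,i_D}U_{\ell,i_j}$. $\mathcal{S}_1=\{\mathbf{u}^1\otimes\cdots\otimes\mathbf{u}^\kappa:\mathbf{u}^i\in\mathbb{S}^{n-1}\}\subset\mathbb{R}^{n^\kappa}$ ($\otimes$ Kronecker product), $\mathcal{S}_2=\{(\mathbf{x}+\mathbf{y})/\|\mathbf{x}+\mathbf{y}\|_2:\mathbf{x},\mathbf{y}\in\mathcal{S}_1,\langle\mathbf{x},\mathbf{y}\rangle=0\}$, $\mathcal{S}_{1,2}=\mathcal{S}_1\cup\mathcal{S}_2$. A matrix $A$ has RIP$(\varepsilon,\mathcal{S})$ if $(1-\varepsilon)\|s\|^2\le\|As\|^2\le(1+\varepsilon)\|s\|^2$ for all $s\in\mathcal{S}$. *)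

(* Defs.v *)
From HB Require Import structures.
From mathcomp Require Import all_boot all_order all_algebra.
Set Implicit Arguments. Unset Strict Implicit. Unset Printing Implicit Defensive.
Import Order.TTheory GRing.Theory Num.Theory.
Local Open Scope ring_scope.

Definition vnorm2 (R : rcfType) (N : nat) (v : 'cV[R]_N) : R :=
  \sum_(i < N) v i 0 ^+ 2.

Definition vdot (R : rcfType) (N : nat) (v w : 'cV[R]_N) : R :=
  \sum_(i < N) v i 0 * w i 0.

(* entry j (as a natural number) of v, 0 if out of range *)
Definition vget (R : rcfType) (N : nat) (v : 'cV[R]_N) (j : nat) : R :=
  oapp (fun o : 'I_N => v o 0) 0 (insub j).

(* Kronecker product u^1 (x) ... (x) u^kappa of kappa vectors in R^n
   (0-based index i, u i = u^{i+1}); u^1 is the most significant factor: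
   (u^1 (x) ... (x) u^kappa)_t = prod_i u^i_{digit_i(t)},
   digit_i(t) = (t / n^(kappa-1-i)) mod n. *)
Definition kronv (R : rcfType) (n kappa : nat) (u : 'I_kappa -> 'cV[R]_n)
  : 'cV[R]_(n ^ kappa) :=
  \col_(t < n ^ kappa)
    \prod_(i < kappa) vget (u i) ((t %/ n ^ (kappa - 1 - i)) %% n)%N.

Definition S1 (R : rcfType) (n kappa : nat) (s : 'cV[R]_(n ^ kappa)) : Prop :=
  exists u : 'I_kappa -> 'cV[R]_n,
    (forall i, vnorm2 (u i) = 1) /\ s = kronv u.

Definition S2 (R : rcfType) (n kappa : nat) (s : 'cV[R]_(n ^ kappa)) : Prop :=
  exists x y : 'cV[R]_(n ^ kappa),
    [/\ S1 x, S1 y, vdot x y = 0 &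
        s = (Num.sqrt (vnorm2 (x + y)))^-1 *: (x + y)].

Definition S12 (R : rcfType) (n kappa : nat) (s : 'cV[R]_(n ^ kappa)) : Prop :=
  S1 s \/ S2 s.

Definition RIP (R : rcfType) (m N : nat) (eps : R) (S : 'cV[R]_N -> Prop)
  (A : 'M[R]_(m, N)) : Prop :=
  forall s, S s ->
    (1 - eps) * vnorm2 s <= vnorm2 (A *m s) <= (1 + eps) * vnorm2 s.

Definition mindex (d : nat) (p : 'I_d -> nat) : finType :=
  {dffun forall j : 'I_d, 'I_(p j)}.

Definition tensor (R : rcfType) (d : nat) (p : 'I_d -> nat) : Type :=
  mindex p -> R.

Definition fnorm2 (R : rcfType) d (p : 'I_d -> nat) (X : tensor R p) : R :=
  \sum_(idx : mindex p) X idx ^+ 2.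

Definition fdot (R : rcfType) d (p : 'I_d -> nat) (X Y : tensor R p) : R :=
  \sum_(idx : mindex p) X idx * Y idx.

Definition outer (R : rcfType) d (p : 'I_d -> nat)
  (v : forall j : 'I_d, 'cV[R]_(p j)) : tensor R p :=
  fun idx => \prod_(j < d) v j (idx j) 0.

Definition upd_dim d (p : 'I_d -> nat) (i0 : 'I_d) (m : nat) (j : 'I_d) : nat :=
  if j == i0 then m else p j.

Lemma upd_dim_neq d (p : 'I_d -> nat) i0 m j : j <> i0 -> upd_dim p i0 m j = p j.
Proof. by rewrite /upd_dim; case: eqP. Qed.

Lemma upd_dim_eq d (p : 'I_d -> nat) i0 m : upd_dim p i0 m i0 = m.
Proof. by rewrite /upd_dim eqxx. Qed.

Definition subst_idx d (p : 'I_d -> nat) i0 m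
  (idx : mindex (upd_dim p i0 m)) (k : 'I_(p i0)) : mindex p :=
  @finfun _ (fun j : 'I_d => 'I_(p j)) (fun j : 'I_d =>
    match j =P i0 with
    | ReflectT e => cast_ord (congr1 p (esym e)) k
    | ReflectF ne => cast_ord (upd_dim_neq p m ne) (idx j)
    end).

Definition modeprod (R : rcfType) d (p : 'I_d -> nat) (i0 : 'I_d) (m : nat)
  (U : 'M[R]_(m, p i0)) (X : tensor R p) : tensor R (upd_dim p i0 m) :=
  fun idx => \sum_(k < p i0)
    X (subst_idx idx k) * U (cast_ord (upd_dim_eq p i0 m) (idx i0)) k.

(* Main.v *)
Require Import Defs.
From HB Require Import structures.
From mathcomp Require Import all_boot all_order all_algebra.
From mathcomp Require Import ring lra.
Import Order.TTheory GRing.Theory Num.Theory.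
Local Open Scope ring_scope.

Lemma sum_dffun_prod (R : comPzRingType) (I : finType) (T_ : I -> finType)
  (P : forall i, T_ i -> R) :
  \sum_(t : {dffun forall i, T_ i}) \prod_i P i (t i) = \prod_i \sum_(j : T_ i) P i j.
Proof.
rewrite (reindex (@dffun_of_fprod I T_)); last first.
  by apply: onW_bij; apply: dffun_of_fprod_bij.
pose Q i := [ffun j => P i j].
transitivity (\sum_(t : fprod T_) \prod_(i in I) Q i (t i)).
  by apply: eq_bigr => t _; apply: eq_bigr => i _; rewrite !ffunE.
transitivity (\prod_i \sum_(j : T_ i) Q i j); last first.
  by apply: eq_bigr => i _; apply: eq_bigr => j _; rewrite ffunE.
rewrite big_fprod.
under [RHS]eq_bigr => i _ do rewrite (big_tag Q).
by rewrite bigA_distr_big_dep.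
Qed.

Set Implicit Arguments. Unset Strict Implicit.
Section S.
Variable R : rcfType.

Lemma vget_ord N (v : 'cV[R]_N) (o : 'I_N) : vget v o = v o 0.
Proof. by rewrite /vget valK. Qed.

Lemma val_subst d (p : 'I_d -> nat) i0 m (idx : mindex (upd_dim p i0 m)) (k : 'I_(p i0)) j :
  nat_of_ord ((subst_idx idx k) j) = if j == i0 then nat_of_ord k else nat_of_ord (idx j).
Proof. by rewrite /subst_idx ffunE; case: eqP => [e|ne] /=. Qed.

Lemma GL d (q : 'I_d -> nat) (F G : 'I_d -> nat -> R) :
  \sum_(idx : mindex q) (\prod_j F j (idx j)) * (\prod_j G j (idx j)) =
  \prod_j \sum_(0 <= i < q j) F j i * G j i.
Proof.
transitivity (\sum_(idx : mindex q) \prod_j (F j (idx j) * G j (idx j))).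
  by apply: eq_bigr => i _; rewrite big_split.
rewrite /mindex (@sum_dffun_prod _ _ _ (fun j (i : 'I_(q j)) => F j i * G j i)).
by apply: eq_bigr => j _; rewrite big_mkord.
Qed.

Lemma outer_vget d (p : 'I_d -> nat) (w : forall j, 'cV[R]_(p j)) idx :
  outer w idx = \prod_j vget (w j) (idx j).
Proof. by apply: eq_bigr => j _; rewrite vget_ord. Qed.

Definition Gf d (p : 'I_d -> nat) i0 m (B : 'M[R]_(m, p i0)) (w : forall j, 'cV[R]_(p j))
  (j : 'I_d) (t : nat) : R :=
  if j == i0 then vget (B *m w i0) t else vget (w j) t.

Arguments Gf {d p i0 m}.

Lemma modeprod_outer d (p : 'I_d -> nat) i0 m (B : 'M[R]_(m, p i0)) (w : forall j, 'cV[R]_(p j)) idx :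
  modeprod B (outer w) idx = \prod_j Gf B w j (idx j).
Proof.
rewrite /modeprod /Gf (bigD1 i0) //= eqxx.
rewrite -[X in vget _ X]/(nat_of_ord (cast_ord (upd_dim_eq p i0 m) (idx i0))) vget_ord mxE.
rewrite mulr_suml; apply: eq_bigr => k _.
rewrite /outer (bigD1 i0) //=.
have -> : w i0 (subst_idx idx k i0) 0 = w i0 k 0.
  by congr (w i0 _ 0); apply: val_inj; rewrite /= val_subst eqxx.
have -> : \prod_(j < d | j != i0) w j (subst_idx idx k j) 0 =
  \prod_(j < d | j != i0) (if j == i0 then vget (B *m w i0) (idx j) else vget (w j) (idx j)).
  by apply: eq_bigr => j /negbTE hj; rewrite hj -vget_ord val_subst hj.
ring.
Qed.

Lemma modeprodD d (p : 'I_d -> nat) i0 m (B : 'M[R]_(m, p i0)) (X Y : tensor R p) idx :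
  modeprod B (fun i => X i + Y i) idx = modeprod B X idx + modeprod B Y idx.
Proof. by rewrite /modeprod -big_split; apply: eq_bigr => k _; rewrite mulrDl. Qed.

Lemma modeprodB d (p : 'I_d -> nat) i0 m (B : 'M[R]_(m, p i0)) (X Y : tensor R p) idx :
  modeprod B (fun i => X i - Y i) idx = modeprod B X idx - modeprod B Y idx.
Proof. by rewrite /modeprod -sumrB; apply: eq_bigr => k _; rewrite mulrBl. Qed.

Lemma sumsqD (T : finType) (f g : T -> R) :
  \sum_i (f i + g i) ^+ 2 = \sum_i f i ^+ 2 + \sum_i g i ^+ 2 + 2 * \sum_i f i * g i.
Proof.
rewrite mulr_sumr -!big_split /=; apply: eq_bigr => i _.
by rewrite sqrrD; ring.
Qed.

Lemma sumsqB (T : finType) (f g : T -> R) :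
  \sum_i (f i - g i) ^+ 2 = \sum_i f i ^+ 2 + \sum_i g i ^+ 2 - 2 * \sum_i f i * g i.
Proof.
rewrite mulr_sumr -big_split -sumrB /=; apply: eq_bigr => i _.
by rewrite sqrrB; ring.
Qed.

Lemma fnorm2D d (p : 'I_d -> nat) (X Y : tensor R p) :
  fnorm2 (fun i => X i + Y i) = fnorm2 X + fnorm2 Y + 2 * fdot X Y.
Proof. exact: sumsqD. Qed.

Lemma fnorm2B d (p : 'I_d -> nat) (X Y : tensor R p) :
  fnorm2 (fun i => X i - Y i) = fnorm2 X + fnorm2 Y - 2 * fdot X Y.
Proof. exact: sumsqB. Qed.

Lemma fnorm2_fdot d (p : 'I_d -> nat) (X : tensor R p) : fnorm2 X = fdot X X.
Proof. by apply: eq_bigr => i _; rewrite expr2. Qed.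

Lemma vnorm2_vdot N (x : 'cV[R]_N) : vnorm2 x = vdot x x.
Proof. by apply: eq_bigr => i _; rewrite expr2. Qed.

Lemma vnorm2D N (x y : 'cV[R]_N) : vnorm2 (x + y) = vnorm2 x + vnorm2 y + 2 * vdot x y.
Proof. rewrite /vnorm2 -sumsqD; apply: eq_bigr => i _; by rewrite mxE. Qed.

Lemma vnorm2N N (x : 'cV[R]_N) : vnorm2 (- x) = vnorm2 x.
Proof. apply: eq_bigr => i _; by rewrite mxE sqrrN. Qed.

Lemma vdotNr N (x y : 'cV[R]_N) : vdot x (- y) = - vdot x y.
Proof. rewrite /vdot -sumrN; apply: eq_bigr => i _; by rewrite mxE mulrN. Qed.

Lemma vnorm2Z N (c : R) (x : 'cV[R]_N) : vnorm2 (c *: x) = c ^+ 2 * vnorm2 x.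
Proof. rewrite /vnorm2 mulr_sumr; apply: eq_bigr => i _; by rewrite mxE exprMn. Qed.

Lemma vnorm2_ge0 N (x : 'cV[R]_N) : 0 <= vnorm2 x.
Proof. by apply: sumr_ge0 => i _; rewrite sqr_ge0. Qed.

Lemma vdot_le1 N (x y : 'cV[R]_N) : vnorm2 x = 1 -> vnorm2 y = 1 -> `|vdot x y| <= 1.
Proof.
move=> hx hy.
have h1 := vnorm2_ge0 (x + y); have h2 := vnorm2_ge0 (x + - y).
rewrite vnorm2D hx hy in h1; rewrite vnorm2D vnorm2N vdotNr hx hy in h2.
rewrite ler_norml; apply/andP; split; lra.
Qed.

Lemma nsum_vdot N (x y : 'cV[R]_N) : \sum_(0 <= i < N) vget x i * vget y i = vdot x y.
Proof. by rewrite big_mkord; apply: eq_bigr => i _; rewrite !vget_ord. Qed.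

Lemma nsum_vdot_cast N N' (e : N = N') (x y : 'cV[R]_N) :
  \sum_(0 <= i < N) vget x i * vget y i =
  vdot (castmx (e, erefl 1%N) x) (castmx (e, erefl 1%N) y).
Proof. case: N' / e; rewrite !castmx_id; exact: nsum_vdot. Qed.

Lemma mul_cast m N N' (e : N = N') (A : 'M[R]_(m, N')) (w : 'cV[R]_N) :
  castmx (erefl m, esym e) A *m w = A *m castmx (e, erefl 1%N) w.
Proof. case: N' / e A => A; by rewrite !castmx_id. Qed.

Lemma vget_opp N (x : 'cV[R]_N) t : vget (- x) t = - vget x t.
Proof. rewrite /vget; case: insub => [o|] /=; by rewrite ?mxE ?oppr0. Qed.

Lemma S1N n kappa (hk : (0 < kappa)%N) (x : 'cV[R]_(n ^ kappa)) : S1 x -> S1 (- x).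
Proof.
case=> u [hu ->].
pose z := Ordinal hk.
exists (fun i => if i == z then - u i else u i); split.
  by move=> i; case: eqP => _; rewrite ?vnorm2N hu.
apply/matrixP => t j; rewrite !mxE.
rewrite [RHS](bigD1 z) //= [in LHS](bigD1 z) //= vget_opp mulNr; congr (- (_ * _)).
by apply: eq_bigr => i /negbTE ->.
Qed.

Lemma prod_le1 (I : finType) (P : pred I) (F : I -> R) :
  (forall i, `|F i| <= 1) -> `|\prod_(i | P i) F i| <= 1.
Proof.
move=> h; apply: (big_ind (fun x => `|x| <= 1)); first by rewrite normr1.
  by move=> x y hx hy; rewrite normrM mulr_ile1.
by move=> i _.
Qed.


Lemma LD d (p : 'I_d -> nat) i0 m (B : 'M[R]_(m, p i0)) (X Y : tensor R p) :
  fnorm2 (modeprod B (fun i => X i + Y i)) =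
  fnorm2 (modeprod B X) + fnorm2 (modeprod B Y) + 2 * fdot (modeprod B X) (modeprod B Y).
Proof. rewrite -fnorm2D; apply: eq_bigr => i _; by rewrite modeprodD. Qed.

Lemma LB d (p : 'I_d -> nat) i0 m (B : 'M[R]_(m, p i0)) (X Y : tensor R p) :
  fnorm2 (modeprod B (fun i => X i - Y i)) =
  fnorm2 (modeprod B X) + fnorm2 (modeprod B Y) - 2 * fdot (modeprod B X) (modeprod B Y).
Proof. rewrite -fnorm2B; apply: eq_bigr => i _; by rewrite modeprodB. Qed.

End S.


Unset Implicit Arguments. Set Strict Implicit.

Theorem lemma4 (R : rcfType) (n kappa d : nat) (i0 : 'I_d) (p : 'I_d -> nat)
  (hn : (0 < n)%N) (hkappa : (0 < kappa)%N) (hd : (0 < d)%N)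
  (hp : p i0 = (n ^ kappa)%N)
  (K m : nat) (v : 'I_K -> forall j : 'I_d, 'cV[R]_(p j))
  (A : 'M[R]_(m, n ^ kappa)) (eps : R) :
  (forall k j, vnorm2 (v k j) = 1) ->
  (forall k l, fdot (outer (v k)) (outer (v l)) = (k == l)%:R) ->
  RIP (eps / 2) (@S12 R n kappa) A ->
  (forall k, S1 (castmx (hp, erefl 1%N) (v k i0))) ->
  let L := modeprod (castmx (erefl m, esym hp) A) in
  (forall k,
     (1 - eps) * fnorm2 (outer (v k)) <= fnorm2 (L (outer (v k)))
     <= (1 + eps) * fnorm2 (outer (v k))) /\
  (forall k l,
     (1 - eps) * fnorm2 (fun idx => outer (v k) idx + outer (v l) idx)
       <= fnorm2 (L (fun idx => outer (v k) idx + outer (v l) idx))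
       <= (1 + eps) * fnorm2 (fun idx => outer (v k) idx + outer (v l) idx)) /\
  (forall k l,
     (1 - eps) * fnorm2 (fun idx => outer (v k) idx - outer (v l) idx)
       <= fnorm2 (L (fun idx => outer (v k) idx - outer (v l) idx))
       <= (1 + eps) * fnorm2 (fun idx => outer (v k) idx - outer (v l) idx)).
Proof.
move=> hnorm horth hrip hS1 L.
set B := castmx (erefl m, esym hp) A.
pose a k := castmx (hp, erefl 1%N) (v k i0).
pose c k l := \prod_(j < d | j != i0) vdot (v k j) (v l j).
have F1 k l : fdot (outer (v k)) (outer (v l)) = vdot (a k) (a l) * c k l.
  rewrite /fdot; under eq_bigr do rewrite !outer_vget.
  rewrite (GL _ (fun j t => vget (v k j) t) (fun j t => vget (v l j) t)) (bigD1 i0) //=.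
  rewrite (nsum_vdot_cast hp); congr (_ * _); apply: eq_bigr => j _; exact: nsum_vdot.
have F2 k l : fdot (L (outer (v k))) (L (outer (v l))) = vdot (A *m a k) (A *m a l) * c k l.
  rewrite /fdot /L; under eq_bigr do rewrite !modeprod_outer.
  rewrite (GL _ (Gf B (v k)) (Gf B (v l))) (bigD1 i0) //=; congr (_ * _).
    by rewrite /Gf eqxx upd_dim_eq nsum_vdot /B !mul_cast.
  apply: eq_bigr => j hj; rewrite /Gf (negbTE hj) upd_dim_neq; first exact: nsum_vdot.
  exact/eqP.
have c1 k : c k k = 1 by apply: big1 => j _; rewrite -vnorm2_vdot hnorm.
have cle k l : `|c k l| <= 1 by apply: prod_le1 => j; exact: vdot_le1.
have na k : vnorm2 (a k) = 1.
  by have := F1 k k; rewrite horth eqxx c1 mulr1 -vnorm2_vdot => <-.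
have fnV k : fnorm2 (outer (v k)) = 1 by rewrite fnorm2_fdot horth eqxx.
have fnLV k : fnorm2 (L (outer (v k))) = vnorm2 (A *m a k).
  by rewrite fnorm2_fdot F2 c1 mulr1 -vnorm2_vdot.
have R1 k : 1 - eps/2 <= vnorm2 (A *m a k) <= 1 + eps/2.
  by have := hrip (a k) (or_introl (hS1 k)); rewrite na !mulr1.
have R2 k l : vdot (a k) (a l) = 0 -> `|vdot (A *m a k) (A *m a l)| <= eps/2.
  move=> h0.
  have key (y : 'cV[R]_(n ^ kappa)) : S1 y -> vnorm2 y = 1 -> vdot (a k) y = 0 ->
    1 - eps/2 <= (vnorm2 (A *m a k) + vnorm2 (A *m y) + 2 * vdot (A *m a k) (A *m y)) / 2
      <= 1 + eps/2.
    move=> hy ny h.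
    set s := (Num.sqrt (vnorm2 (a k + y)))^-1 *: (a k + y).
    have := hrip s (or_intror (ex_intro _ (a k) (ex_intro _ y (And4 (hS1 k) hy h erefl)))).
    have e2 : vnorm2 (a k + y) = 2 by rewrite vnorm2D na ny h; lra.
    have ns : vnorm2 s = 1.
      by rewrite vnorm2Z e2 exprVn sqr_sqrtr ?ler0n // mulVf // pnatr_eq0.
    have nAs : vnorm2 (A *m s) =
      (vnorm2 (A *m a k) + vnorm2 (A *m y) + 2 * vdot (A *m a k) (A *m y)) / 2.
      by rewrite -scalemxAr vnorm2Z e2 exprVn sqr_sqrtr ?ler0n // mulmxDr vnorm2D mulrC.
    by rewrite ns nAs !mulr1.
  have h1 := key (a l) (hS1 l) (na l) h0.
  have h2 := key (- a l) (S1N hkappa (hS1 l)) (ltac:(by rewrite vnorm2N na))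
    (ltac:(by rewrite vdotNr h0 oppr0)).
  rewrite mulmxN vnorm2N vdotNr in h2.
  move: h1 h2 (R1 k) (R1 l) => /andP[? ?] /andP[? ?] /andP[? ?] /andP[? ?].
  rewrite ler_norml; apply/andP; split; lra.
have R3 k l : vdot (a k) (a l) = 0 -> `|vdot (A *m a k) (A *m a l) * c k l| <= eps/2.
  move=> h0; rewrite normrM -[eps/2]mulr1; apply: ler_pM => //; exact: R2.
split.
  move=> k; rewrite fnV fnLV !mulr1; have := R1 k; case/andP => ? ?.
  apply/andP; split; lra.
split.
  move=> k l; rewrite fnorm2D /L LD fnV fnV -/L !fnLV horth F2.
  have := R1 k; have := R1 l; case/andP => ? ? /andP [? ?].
  case: (eqVneq k l) => [<-|hkl].
    rewrite c1 mulr1 -vnorm2_vdot (_ : true%:R = 1 :> R) ?mulr1n //; apply/andP; split; lra.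
  rewrite (_ : false%:R = 0 :> R) ?mulr0n //; have := horth k l; rewrite F1 (negbTE hkl) => /eqP.
  rewrite mulf_eq0 => /orP [/eqP h0|/eqP ->].
    have := R3 k l h0; rewrite ler_norml => /andP [? ?]; apply/andP; split; lra.
  rewrite mulr0; apply/andP; split; lra.
move=> k l; rewrite fnorm2B /L LB fnV fnV -/L !fnLV horth F2.
have := R1 k; have := R1 l; case/andP => ? ? /andP [? ?].
case: (eqVneq k l) => [<-|hkl].
  rewrite c1 mulr1 -vnorm2_vdot (_ : true%:R = 1 :> R) ?mulr1n //; apply/andP; split; lra.
rewrite (_ : false%:R = 0 :> R) ?mulr0n //; have := horth k l; rewrite F1 (negbTE hkl) => /eqP.
rewrite mulf_eq0 => /orP [/eqP h0|/eqP ->].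
  have := R3 k l h0; rewrite ler_norml => /andP [? ?]; apply/andP; split; lra.
rewrite mulr0; apply/andP; split; lra.
Qed.
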